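(* Let $a\ge3$ and let $H\in\mathfrak{H}$ (notation in context). Then \[ \{n\in\mathbb{N}:\ \text{every prime } q \text{ dividing } n \text{ satisfies } q\bmod a\in H\}\subseteq\mathcal{E}^*_a. \]
   Context: Let $a\ge3$ have canonical factorization $a=2^{\gamma_0}p_1^{\gamma_1}\cdots p_k^{\gamma_k}$ ($p_i$ distinct odd primes). Let $G=(\mathbb{Z}/a\mathbb{Z})^*$, identified by the Chinese remainder theorem with $G_0\times G_1\times\cdots\times G_k$, where $G_0=(\mathbb{Z}/2^{\gamma_0}\mathbb{Z})^*$ and $G_i=(\mathbb{Z}/p_i^{\gamma_i}\mathbb{Z})^*$. For $1\le i\le k$ let $H_i$ be the unique maximal subgroup of the cyclic group $G_i$ not containing $-1$ (its subgroup of odd order); its index is $2^{m_i}$ where $2^{m_i}\|p_i-1$. Let $H_0=G_0$ (trivial) if $\gamma_0\le1$; if $\gamma_0\ge2$, $H_0$ denotes any subgroup of $G_0$ of index $2$ not containing $-1\bmod 2^{\gamma_0}$. Let $\delta=0$ if $\gamma_0\le1$ and $\delta=2$ if $\gamma_0\ge2$, and define $m\ge1$ by $2^m\|\gcd(\delta,p_1-1,\dots,p_k-1)$. Let $\mathfrak{H}$ be the set of subgroups of $G$ of the form $G_0\times\cdots\times G_{i-1}\times H_i\times G_{i+1}\times\cdots\times G_k$ ($0\le i\le k$, any allowed choice of $H_0$ when $i=0$) with index $[G:H]=2^m$. For a positive integer $n$, $R(n;a)$ is the number of pairs $(x,y)$ of positive integers with $\frac an=\frac1x+\frac1y$, and $\mathcal{E}^*_a=\{n\in\mathbb{N}:R(n;a)=0,\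 \gcd(n,a)=1\}$. *)

(* Defs.v *)
From HB Require Import structures.
From mathcomp Require Import all_boot all_order all_algebra all_fingroup all_solvable.
Set Implicit Arguments. Unset Strict Implicit. Unset Printing Implicit Defensive.
Import GRing.Theory.

(* G = (Z/aZ)^* is the finite group {unit 'Z_a} (a >= 3).
   For b | a, the reduction map G -> (Z/bZ)^*, u |-> u mod b
   (a component of the CRT identification). *)
Definition redu (a b : nat) (u : {unit 'Z_a}) : {unit 'Z_b} :=
  insubd (1%g : {unit 'Z_b}) (inZp (nat_of_ord (FinRing.uval u)) : 'Z_b).
Arguments redu : clear implicits.

Definition minus1 (b : nat) : {unit 'Z_b} :=
  insubd (1%g : {unit 'Z_b}) (-1 : 'Z_b)%R.

(* Preimage in G of a subset K of (Z/bZ)^*; for b = p_i^{gamma_i} this is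
   the subgroup G_0 x ... x K x ... x G_k under the CRT identification. *)
Definition Hpre (a b : nat) (K : {set {unit 'Z_b}}) : {set {unit 'Z_a}} :=
  [set u | redu a b u \in K].
Arguments Hpre : clear implicits.

Definition gamma0 (a : nat) : nat := logn 2 a.

Definition delta (a : nat) : nat := if 1 < gamma0 a then 2 else 0.

Definition mexp (a : nat) : nat :=
  logn 2 (foldr gcdn (delta a) [seq p.-1 | p <- primes a & odd p]).

Definition Hodd (b : nat) : {set {unit 'Z_b}} := [set v | odd #[v]%g].
Arguments Hodd : clear implicits.

Definition in_frakH (a : nat) (H : {set {unit 'Z_a}}) : Prop :=
  #|[set: {unit 'Z_a}] : H|%g = 2 ^ mexp a /\
  [\/
      exists p, [/\ prime p, odd p, p %| a &
                   H = Hpre a (p ^ logn p a) (Hodd (p ^ logn p a))],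
      exists K : {group {unit 'Z_(2 ^ gamma0 a)}},
        [/\ 1 < gamma0 a, #|[set: {unit 'Z_(2 ^ gamma0 a)}] : K|%g = 2,
            minus1 (2 ^ gamma0 a) \notin K & H = Hpre a (2 ^ gamma0 a) K]
    |
      gamma0 a <= 1 /\ H = [set: {unit 'Z_a}] ].

Definition resid_in (a : nat) (H : {set {unit 'Z_a}}) (q : nat) : Prop :=
  exists2 u, u \in H & nat_of_ord (FinRing.uval u) = q %% a.

Definition egypt_sol (a n x y : nat) : Prop :=
  [/\ 0 < x, 0 < y &
      ((a%:R / n%:R : rat) = (x%:R)^-1 + (y%:R)^-1)%R].

Definition R_zero (a n : nat) : Prop := ~ exists x y, egypt_sol a n x y.

Definition Estar (a n : nat) : Prop := [/\ 0 < n, R_zero a n & coprime n a].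

(* Main.v *)
Require Import Defs.
From HB Require Import structures.
From mathcomp Require Import all_boot all_order all_algebra all_fingroup all_solvable.
From mathcomp Require Import ring.
Module Helpers.
Set Implicit Arguments. Unset Strict Implicit.
Import GRing.Theory Num.Theory.


Lemma uval_nat a (u : {unit 'Z_a}) : 1 < a ->
  FinRing.uval u = ((nat_of_ord (FinRing.uval u))%:R : 'Z_a)%R.
Proof.
move=> a1; apply: val_inj; rewrite /= val_Zp_nat // modn_small //.
by apply: leq_trans (ltn_ord _) _; rewrite Zp_cast.
Qed.

Lemma unit_coprime a (u : {unit 'Z_a}) : 1 < a ->
  coprime a (nat_of_ord (FinRing.uval u)).
Proof.
move=> a1; rewrite -unitZpE // -uval_nat //; exact: (valP u).
Qed.

Lemma redu_val a b (u : {unit 'Z_a}) : 1 < a -> 1 < b -> b %| a ->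
  FinRing.uval (redu a b u) = ((nat_of_ord (FinRing.uval u))%:R : 'Z_b)%R.
Proof.
move=> a1 b1 ba; rewrite /redu -Zp_nat insubdK //.
rewrite unfold_in /=; have := unitZpE (nat_of_ord (FinRing.uval u)) b1; rewrite /= => ->.
exact: coprime_dvdl ba (unit_coprime u a1).
Qed.

Lemma reduM a b (u w : {unit 'Z_a}) : 1 < a -> 1 < b -> b %| a ->
  redu a b (u * w)%g = (redu a b u * redu a b w)%g.
Proof.
move=> a1 b1 ba; apply: val_inj.
rewrite /= !redu_val // FinRing.val_unitM.
have -> : nat_of_ord (\val u * \val w)%R = (nat_of_ord (\val u) * nat_of_ord (\val w)) %% a.
  exact: (congr1 (fun m => _ %% m) (Zp_cast a1)).
rewrite -natrM; apply: ord_inj; rewrite !val_Zp_nat //; exact: modn_dvdm.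
Qed.

Lemma redu1 a b : 1 < a -> 1 < b -> b %| a -> redu a b 1%g = 1%g.
Proof.
move=> a1 b1 ba; apply: val_inj; rewrite /= redu_val // FinRing.val_unit1.
Qed.

Lemma zval_nat a (x : 'Z_a) : 1 < a -> x = ((nat_of_ord x)%:R : 'Z_a)%R.
Proof.
move=> a1; apply: ord_inj; rewrite val_Zp_nat // modn_small //.
by apply: leq_trans (ltn_ord _) _; rewrite Zp_cast.
Qed.

Lemma Zc0 c m : 1 < c -> (((m%:R : 'Z_c) == 0)%R = (c %| m)).
Proof.
move=> c1; rewrite /dvdn; apply/eqP/eqP => [/(congr1 (@nat_of_ord _))|h].
  by rewrite val_Zp_nat.
by apply: ord_inj; rewrite val_Zp_nat.
Qed.

Lemma redu_m1 a b : 2 < a -> 2 < b -> b %| a -> redu a b (minus1 a) = minus1 b.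
Proof.
move=> a2 b2 ba.
have a1 : 1 < a by apply: ltnW. have b1 : 1 < b by apply: ltnW.
have m1u : forall c, 1 < c -> (-1 : 'Z_c)%R \is a GRing.unit by move=> c c1; rewrite unitrN unitr1.
apply: val_inj; rewrite /= redu_val // /minus1 insubdK; last exact: m1u.
rewrite insubdK; last exact: m1u.
set v := nat_of_ord (-1 : 'Z_a)%R.
have hv : a %| v.+1.
  rewrite -(Zc0 _ a1) -[v.+1]addn1 natrD /v -zval_nat // addrC subrr //.
have hb : b %| v.+1 by apply: dvdn_trans hv.
move: hb; rewrite -(Zc0 _ b1) -[v.+1]addn1 natrD addr_eq0 => /eqP //.
Qed.

Lemma Hpre_group a b (K : {group {unit 'Z_b}}) : 1 < a -> 1 < b -> b %| a ->
  group_set (Hpre a b K).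
Proof.
move=> a1 b1 ba; apply/group_setP; split; first by rewrite inE redu1 // group1.
by move=> x y; rewrite !inE reduM // => hx hy; rewrite groupM.
Qed.

Lemma units_comm b (x y : {unit 'Z_b}) : commute x y.
Proof. apply: val_inj; rewrite !FinRing.val_unitM; exact: mulrC. Qed.

Lemma Hodd_group b : group_set (Hodd b).
Proof.
apply/group_setP; split; first by rewrite inE order1.
move=> x y; rewrite !inE => ox oy.
have h : (#[x * y]%g %| #[x]%g * #[y]%g).
  rewrite order_dvdn expgMn; last exact: units_comm.
  by rewrite expgM expg_order expg1n mulnC expgM expg_order expg1n mulg1.
apply: (dvdn_odd h); by rewrite oddM ox oy.
Qed.


Lemma egypt_nat a n x y : 0 < n -> egypt_sol a n x y -> a * x * y = n * (x + y).
Proof.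
move=> n0 [x0 y0 E].
have E2 : (a%:R * x%:R * y%:R = n%:R * (x%:R + y%:R) :> rat)%R.
  have nz : (n%:R != 0 :> rat)%R by rewrite pnatr_eq0 -lt0n.
  have xz : (x%:R != 0 :> rat)%R by rewrite pnatr_eq0 -lt0n.
  have yz : (y%:R != 0 :> rat)%R by rewrite pnatr_eq0 -lt0n.
  have -> : (a%:R : rat) = (a%:R / n%:R * n%:R)%R by rewrite mulfVK.
  rewrite E; field; by rewrite xz yz.
by move: E2; rewrite -natrD -!natrM => /eqP; rewrite eqr_nat => /eqP.
Qed.

Lemma egypt_div a n x y : 0 < n -> coprime n a -> egypt_sol a n x y ->
  exists x1 y1, [/\ x1 * y1 %| n & a %| x1 + y1].
Proof.
move=> n0 cna sol; have := egypt_nat n0 sol; case: sol => x0 y0 _ E.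
set g := gcdn x y.
have g0 : 0 < g by rewrite gcdn_gt0 x0.
have hx : x = (x %/ g) * g by rewrite divnK // dvdn_gcdl.
have hy : y = (y %/ g) * g by rewrite divnK // dvdn_gcdr.
set x1 := x %/ g in hx *; set y1 := y %/ g in hy *.
have cxy : coprime x1 y1.
  have : gcdn x y = gcdn x1 y1 * g by rewrite muln_gcdl -hx -hy.
  rewrite -/g -{1}[g]mul1n => /eqP; rewrite eqn_pmul2r // eq_sym => /eqP.
  by rewrite /coprime => ->.
have E1 : a * x1 * y1 * g = n * (x1 + y1).
  apply/eqP; rewrite -(eqn_pmul2r g0); apply/eqP.
  have h : a * (x1 * g) * (y1 * g) = n * (x1 * g + y1 * g) by rewrite -hx -hy.
  rewrite (_ : _ * g * g = a * (x1 * g) * (y1 * g)); last by ring.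
  by rewrite h; ring.
exists x1, y1; split.
  rewrite -(Gauss_dvdl _ (p := x1 + y1)).
    by apply/dvdnP; exists (a * g); rewrite -E1; ring.
  rewrite coprimeMl; apply/andP; split.
    by rewrite /coprime gcdnDl.
  by rewrite /coprime gcdnDr gcdnC.
rewrite -(Gauss_dvdr _ (n := n)); last by rewrite coprime_sym.
by apply/dvdnP; exists (x1 * y1 * g); rewrite -E1; ring.
Qed.


Lemma resid_ring a (H : {set {unit 'Z_a}}) q : 1 < a -> resid_in H q ->
  exists2 u, u \in H & FinRing.uval u = (q%:R : 'Z_a)%R.
Proof.
move=> a1 [u uH hu]; exists u => //.
by rewrite (uval_nat u a1) hu Zp_nat_mod.
Qed.

Lemma core a (H : {set {unit 'Z_a}}) n : 2 < a -> group_set H ->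
  minus1 a \notin H -> 0 < n ->
  (forall q : nat, prime q -> q %| n -> resid_in H q) -> Estar a n.
Proof.
move=> a2 gH m1H n0 hq.
have a1 : 1 < a by apply: ltnW.
pose HG : {group _} := Group gH.
have HGE : H = HG by [].
have divP : forall m, m %| n -> exists2 u, u \in H & FinRing.uval u = (m%:R : 'Z_a)%R.
  move=> m; elim: m {-2}m (leqnn m) => [|k IH] m.
    by rewrite leqn0 => /eqP ->; rewrite dvd0n => /eqP n00; rewrite n00 in n0.
  move=> mk mn.
  have m0 : 0 < m by apply: dvdn_gt0 mn.
  case: (ltngtP m 1) => [|m1|->].
  - by rewrite ltnS leqn0 => /eqP m00; rewrite m00 in m0.
  - have pp := pdiv_prime m1.
    have pm := pdiv_dvd m.
    have [u uH hu] := resid_ring a1 (hq _ pp (dvdn_trans pm mn)).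
    have hm : m = (m %/ pdiv m) * pdiv m by rewrite divnK.
    have lt : m %/ pdiv m <= k.
      by rewrite -ltnS; apply: leq_trans mk; apply: ltn_Pdiv => //; apply: prime_gt1.
    have [w wH hw] := IH _ lt (dvdn_trans (@dvdn_div (pdiv m) m pm) mn).
    exists (w * u)%g; first by rewrite HGE groupM.
    have -> : FinRing.uval (w * u)%g = (FinRing.uval w * FinRing.uval u)%R by [].
    by rewrite hu hw -natrM -hm.
  - exists 1%g; first by rewrite HGE group1.
    by rewrite FinRing.val_unit1.
have cna : coprime n a.
  have [g0|g1|e] := ltngtP (gcdn n a) 1.
  - by move: g0; rewrite ltnNge gcdn_gt0 n0.
  2: by rewrite /coprime e.
  have pp := pdiv_prime g1.
  have pn : pdiv (gcdn n a) %| n := dvdn_trans (pdiv_dvd _) (dvdn_gcdl n a).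
  have pa : pdiv (gcdn n a) %| a := dvdn_trans (pdiv_dvd _) (dvdn_gcdr n a).
  have [u uH hu] := hq _ pp pn.
  have := unit_coprime u a1; rewrite hu coprime_modr coprime_sym prime_coprime //.
  by rewrite pa.
split=> //.
move=> [x [y sol]].
have := egypt_div n0 cna sol; move=> [x1] [y1] [dn da].
have [u1 u1H h1] := divP x1 (dvdn_trans (dvdn_mulr y1 (dvdnn x1)) dn).
have [u2 u2H h2] := divP y1 (dvdn_trans (dvdn_mull x1 (dvdnn y1)) dn).
have e : u1 = (minus1 a * u2)%g.
  apply: val_inj.
  have -> : \val (minus1 a * u2)%g = (FinRing.uval (minus1 a) * FinRing.uval u2)%R by [].
  have m1v : FinRing.uval (minus1 a) = (-1)%R.
    by rewrite /minus1; apply: insubdK; rewrite unfold_in unitrN unitr1.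
  change (FinRing.uval u1 = (FinRing.uval (minus1 a) * FinRing.uval u2)%R).
  rewrite m1v h1 h2 mulN1r; apply/eqP; rewrite -subr_eq0 opprK -natrD Zc0 //.
have : minus1 a \in HG.
  have -> : minus1 a = (u1 * u2^-1)%g by rewrite e -mulgA mulgV mulg1.
  by rewrite groupM // groupV.
by rewrite -HGE (negbTE m1H).
Qed.


Lemma foldr_gcd_dvd d l x : x \in l -> foldr gcdn d l %| x.
Proof.
elim: l => //= y l IH; rewrite inE => /orP [/eqP ->|xl].
  exact: dvdn_gcdl.
exact: dvdn_trans (dvdn_gcdr _ _) (IH xl).
Qed.

Lemma foldr_gcd_2 d l : 2 %| d -> all (fun x => 2 %| x) l -> 2 %| foldr gcdn d l.
Proof.
move=> hd; elim: l => //= y l IH /andP [hy hl].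
by rewrite dvdn_gcd hy IH.
Qed.

Lemma mexp_pos a : 2 < a -> gamma0 a <= 1 -> 0 < mexp a.
Proof.
move=> a2 g1.
have a0 : 0 < a by apply: leq_trans a2.
have [m cm ha] := pfactor_coprime (isT : prime 2) a0.
rewrite coprime2n in cm.
have m1 : 1 < m.
  move: g1 ha a2; rewrite /gamma0; case: (logn 2 a) => [|[|e]] //= _ ->.
    by rewrite muln1 => h; apply: leq_trans h.
  by rewrite expn1; case: m cm => [|[|]].
set q := pdiv m.
have pq : prime q := pdiv_prime m1.
have qm : q %| m := pdiv_dvd m.
have oq : odd q := dvdn_odd qm cm.
have qa : q %| a by rewrite ha; apply: dvdn_mulr.
have q2 : 2 < q := odd_prime_gt2 oq pq.
set l := [seq p.-1 | p <- primes a & odd p].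
have ql : q.-1 \in l.
  apply: map_f; rewrite mem_filter oq mem_primes pq a0 qa //.
have dl : delta a = 0 by rewrite /delta ltnNge g1.
rewrite /mexp -/l dl logn_gt0 mem_primes /=.
have f0 : 0 < foldr gcdn 0 l.
  apply: dvdn_gt0 (foldr_gcd_dvd 0 ql); by rewrite -subn1 subn_gt0 ltnW.
rewrite f0 /=; apply: foldr_gcd_2 => //.
apply/allP => x /mapP [p]; rewrite mem_filter => /andP [op _] ->.
by rewrite dvdn2; case: p op.
Qed.


Lemma m1_not_odd b : 2 < b -> minus1 b \notin Hodd b.
Proof.
move=> b2; have b1 : 1 < b by apply: ltnW.
have m1v : FinRing.uval (minus1 b) = (-1)%R.
  by rewrite /minus1; apply: insubdK; rewrite unfold_in unitrN unitr1.
rewrite inE; apply/negP => o.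
have sq : (minus1 b ^+ 2)%g = 1%g.
  apply: val_inj; change (FinRing.uval (minus1 b) ^+ 2 = 1 :> 'Z_b)%R.
  by rewrite m1v expr2 mulN1r opprK.
have d2 : (#[minus1 b]%g %| 2) by rewrite order_dvdn sq.
have e1 : #[minus1 b]%g = 1.
  have le2 : #[minus1 b]%g <= 2 := dvdn_leq (isT : 0 < 2) d2.
  move: o le2 (order_gt0 (minus1 b)); case: #[_]%g => [|[|[|]]] //.
move/eqP: e1; rewrite order_eq1 => /eqP h.
have : FinRing.uval (minus1 b) = FinRing.uval (1%g : {unit 'Z_b}) by rewrite h.
rewrite m1v FinRing.val_unit1 => /eqP; rewrite eq_sym -subr_eq0 opprK.
rewrite (_ : (1 + 1 = 2%:R :> 'Z_b)%R) // Zc0 //.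
by move/(dvdn_leq (isT : 0 < 2)); rewrite leqNgt b2.
Qed.

End Helpers.
Import Helpers.


Theorem lemma2p7 (a : nat) (H : {set {unit 'Z_a}}) :
  3 <= a -> in_frakH H ->
  forall n : nat, 0 < n ->
    (forall q : nat, prime q -> q %| n -> resid_in H q) ->
    Estar a n.
Proof.
move=> a3 [idx [[p [pp op pa ->]] | [K [g1 _ m1K ->]] | [g1 HT]]] n n0 hq.
- have a1 : 1 < a by apply: ltnW.
  set b := p ^ logn p a.
  have ba : b %| a := pfactor_dvdnn p a.
  have p2 : 2 < p := odd_prime_gt2 op pp.
  have l0 : 0 < logn p a by rewrite logn_gt0 mem_primes pp pa (leq_trans (isT : 0 < 3) a3).
  have b2 : 2 < b.
    apply: leq_trans p2 _; rewrite /b -{1}(expn1 p) leq_exp2l; [exact: l0 | exact: prime_gt1 pp].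
  apply: (@core a (Hpre a b (Hodd b)) n) => //.
    exact: (Hpre_group (Group (Hodd_group b)) a1 (ltnW b2) ba).
  by rewrite inE redu_m1 //; apply: m1_not_odd.
- have a1 : 1 < a by apply: ltnW.
  set b := 2 ^ gamma0 a.
  have ba : b %| a := pfactor_dvdnn 2 a.
  have b2 : 2 < b.
    by rewrite /b -[X in X < _](expn1 2) ltn_exp2l.
  apply: (@core a (Hpre a b K) n) => //.
    exact: (Hpre_group K a1 (ltnW b2) ba).
  by rewrite inE redu_m1.
- exfalso; move: idx; rewrite HT (indexgg [set: {unit 'Z_a}]%G).
  have : 1 < 2 ^ mexp a by rewrite -[X in X < _](expn0 2) ltn_exp2l // mexp_pos.
  by move=> h e; rewrite -e in h.
Qed.
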